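(* Let $\tau_1=(V,E_1)$ and $\tau_2=(V,E_2)$ be two rooted trees on the same finite vertex set $V$ having the same multi-index, i.e. every vertex $v\in V$ has the same number of children in $\tau_1$ as in $\tau_2$. Then there exists a bijection $\sigma$ of $V$ such that $\sigma.\tau_1=\tau_2$.
   Context: A rooted tree on a finite vertex set $V\subset\mathbb{N}$ is a set $E$ of ordered pairs of elements of $V$ (an edge $(v,w)$ means $w$ is a child of $v$) such that exactly one vertex $r$ (the root) has no parent, every other vertex has exactly one parent, and every vertex is connected to the root by following parents. For a bijection $\sigma$ of $V$ and a rooted tree $\tau=(V,E)$, set $E_\sigma=\{(v,\sigma(w)):(v,w)\in E\}$ and $\sigma.\tau=(V,E_\sigma)$; the equality $\sigma.\tau_1=\tau_2$ means $(E_1)_\sigma=E_2$. *)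

(* Defs.v *)
From HB Require Import structures.
From mathcomp Require Import all_boot.
From mathcomp Require Import finmap.
Set Implicit Arguments. Unset Strict Implicit. Unset Printing Implicit Defensive.
Local Open Scope fset_scope.

(* A rooted tree on a finite vertex set V of naturals: E is a finite set of
   ordered pairs (v,w) meaning "w is a child of v". *)
Definition is_rooted_tree (V : {fset nat}) (E : {fset (nat * nat)}) : Prop :=
  (forall p, p \in E -> (p.1 \in V) /\ (p.2 \in V)) /\
  exists2 r, r \in V &
    [/\ (forall u, (u, r) \notin E),
        (forall v, v \in V -> v != r -> exists! u, (u, v) \in E) &
        (forall v, v \in V -> exists s : seq nat,
            path (fun x y => (y, x) \in E) v s && (last v s == r))].

Definition nchildren (E : {fset (nat * nat)}) (v : nat) : nat :=
  #|` [fset p in E | p.1 == v] |.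

Definition is_bijection_of (V : {fset nat}) (sigma : nat -> nat) : Prop :=
  [/\ (forall v, v \in V -> sigma v \in V),
      {in V &, injective sigma} &
      (forall w, w \in V -> exists2 v, v \in V & sigma v = w)].

Definition act_edges (sigma : nat -> nat) (E : {fset (nat * nat)}) : {fset (nat * nat)} :=
  [fset (p.1, sigma p.2) | p in E].

(* Main.v *)
Require Import Defs.
From HB Require Import structures.
From mathcomp Require Import all_boot.
From mathcomp Require Import finmap.
Local Open Scope fset_scope.

Definition chl (E : {fset (nat * nat)}) (u : nat) : seq nat :=
  map snd (enum_fset [fset p in E | p.1 == u]).

Definition par (E : {fset (nat * nat)}) (x : nat) : nat :=
  head 0%N [seq p.1 | p <- enum_fset E & p.2 == x].

Lemma chlP E u x : (x \in chl E u) = ((u, x) \in E).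
Proof.
apply/idP/idP.
  case/mapP => [[a b]]; rewrite in_fsetE /= inE /= => /andP [H /eqP e] ->.
  by rewrite -e.
move=> H; apply/mapP; exists (u, x) => //.
by rewrite in_fsetE /= inE H eqxx.
Qed.

Lemma chl_uniq E u : uniq (chl E u).
Proof.
rewrite map_inj_in_uniq ?fset_uniq //.
move=> [a b] [c d]; rewrite !in_fsetE /= !inE /= => /andP [_ /eqP ->] /andP [_ /eqP ->].
by move=> ->.
Qed.

Lemma size_chl E u : size (chl E u) = nchildren E u.
Proof. by rewrite size_map. Qed.

Lemma parP {E u x} :
  (forall u u' x, (u, x) \in E -> (u', x) \in E -> u = u') ->
  (u, x) \in E -> par E x = u.
Proof.
move=> U H; rewrite /par.
have : (u, x) \in [seq p <- enum_fset E | p.2 == x] by rewrite mem_filter eqxx.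
case e: [seq p <- enum_fset E | p.2 == x] => [//|[a b] s] _ /=.
have : (a, b) \in [seq p <- enum_fset E | p.2 == x] by rewrite e inE eqxx.
rewrite mem_filter /= => /andP [/eqP eb H2]; subst b.
exact: U H2 H.
Qed.

Lemma tree_uniq {V E} : is_rooted_tree V E ->
  forall u u' x, (u, x) \in E -> (u', x) \in E -> u = u'.
Proof.
move=> [HE [r rV [Hr Hu _]]] u u' x H1 H2.
have xV : x \in V by have := HE _ H1 => -[].
have xr : x != r by apply/eqP => e; move: (Hr u); rewrite -e H1.
have [w [_ Hw]] := Hu x xV xr.
by rewrite -(Hw _ H1) -(Hw _ H2).
Qed.

Theorem proposition3p6 (V : {fset nat}) (E1 E2 : {fset (nat * nat)}) :
  is_rooted_tree V E1 -> is_rooted_tree V E2 ->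
  (forall v, v \in V -> nchildren E1 v = nchildren E2 v) ->
  exists sigma : nat -> nat, is_bijection_of V sigma /\ act_edges sigma E1 = E2.
Proof.
move=> T1 T2 Hn.
have U1 := tree_uniq T1; have U2 := @tree_uniq _ _ T2.
case: (T1) => [HE1 [r1 r1V [Hr1 Hu1 _]]].
case: (T2) => [HE2 [r2 r2V [Hr2 Hu2 _]]].
pose sigma x := if x == r1 then r2
  else nth 0%N (chl E2 (par E1 x)) (index x (chl E1 (par E1 x))).
have A : forall u x, (u, x) \in E1 -> (u, sigma x) \in E2.
  move=> u x H.
  have xr : (x == r1) = false by apply/eqP => e; move: (Hr1 u); rewrite -e H.
  have uV : u \in V by have := HE1 _ H => -[].
  rewrite /sigma xr (parP U1 H) -chlP; apply: mem_nth.
  by rewrite size_chl -Hn // -size_chl index_mem chlP.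
have B : forall u w, (u, w) \in E2 -> exists2 x, (u, x) \in E1 & sigma x = w.
  move=> u w H.
  have uV : u \in V by have := HE2 _ H => -[].
  have Hi : (index w (chl E2 u) < size (chl E1 u))%N.
    by rewrite size_chl Hn // -size_chl index_mem chlP.
  set x := nth 0%N (chl E1 u) (index w (chl E2 u)).
  have Hx : (u, x) \in E1 by rewrite -chlP mem_nth.
  exists x => //.
  have xr : (x == r1) = false by apply/eqP => e; move: (Hr1 u); rewrite -e Hx.
  rewrite /sigma xr (parP U1 Hx) index_uniq ?chl_uniq // nth_index //.
  by rewrite chlP.
have Hpar : forall x, x \in V -> x != r1 -> exists u, (u, x) \in E1.
  by move=> x xV xr; have [u [Hu _]] := Hu1 x xV xr; exists u.
exists sigma; split; [split|].
- move=> x xV; case: (eqVneq x r1) => [-> | e].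
    by rewrite /sigma eqxx.
  have [u Hu] := Hpar x xV e.
  by have := HE2 _ (A _ _ Hu) => -[].
- move=> x y xV yV.
  have ne : forall z u, (u, z) \in E1 -> sigma z != r2.
    by move=> z u H; apply/eqP => e; move: (Hr2 u); rewrite -e A.
  case: (eqVneq x r1) => [-> | xr]; case: (eqVneq y r1) => [-> | yr] //.
  + have [u Hu] := Hpar y yV yr; move=> e; move: (ne _ _ Hu).
    by rewrite -e /sigma eqxx eqxx.
  + have [u Hu] := Hpar x xV xr; move=> e; move: (ne _ _ Hu).
    by rewrite e /sigma eqxx eqxx.
  have [u Hu] := Hpar x xV xr; have [u' Hu'] := Hpar y yV yr.
  move=> e.
  have uu : u = u' by apply: U2 (A _ _ Hu) _; rewrite e; apply: A.
  subst u'.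
  have uV : u \in V by have := HE1 _ Hu => -[].
  move: e; rewrite /sigma (negPf xr) (negPf yr) (parP U1 Hu) (parP U1 Hu').
  move/eqP; rewrite nth_uniq ?chl_uniq //; last 2 first.
  + by rewrite size_chl -Hn // -size_chl index_mem chlP.
  + by rewrite size_chl -Hn // -size_chl index_mem chlP.
  move/eqP => ei.
  by rewrite -(nth_index 0%N (_ : x \in chl E1 u)) ?chlP // ei nth_index ?chlP.
- move=> w wV; case: (eqVneq w r2) => [-> | wr].
    by exists r1; rewrite /sigma ?eqxx.
  have [u [Hu _]] := Hu2 w wV wr.
  have [x Hx <-] := B _ _ Hu.
  by exists x => //; have := HE1 _ Hx => -[].
apply/fsetP => [[u w]]; apply/idP/idP.
  case/imfsetP => [[a b]] /= Hab [-> ->]; exact: A.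
move=> H; have [x Hx <-] := B _ _ H.
by apply/imfsetP; exists (u, x).
Qed.
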